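(* Let $S$ be a semiregular pseudocompact semitopological semigroup which is an orthogonal sum $S=\sum_{i\in\mathscr I}B^0_{\lambda_i}(S_i)$ of topological Brandt $\lambda_i^0$-extensions of semitopological monoids $S_i$ with zeros. Then for every open neighbourhood $U(0)$ of the zero $0$ of $S$ the set of triples $(i,\alpha_i,\beta_i)$ with $i\in\mathscr I$, $\alpha_i,\beta_i\in\lambda_i$ and $(S_i)_{\alpha_i,\beta_i}\not\subseteq U(0)$ is finite.
   Context: All spaces are Hausdorff; a semitopological semigroup is a Hausdorff space with separately continuous associative operation. A space is semiregular if it has a base of regular open sets ($A$ is regular open if $\operatorname{int}\operatorname{cl}A=A$); pseudocompact means every locally finite family of non-empty open sets is finite. For a semigroup $T$ with zero $0_T$ and a cardinal $\lambda\ge1$, $B^0_\lambda(T)=(\lambda\times (T\setminus\{0_T\})\times\lambda)\cup\{0\}$ with $(\alpha,a,\beta)(\gamma,b,\delta)=(\alpha,ab,\delta)$ if $\beta=\gamma$ and $ab\ne0_T$, and $0$ otherwise, $0$ a zero. For $A\subseteq T$, $A_{\alpha,\beta}=\{(\alpha,s,\beta):s\in A\setminus\{0_T\}\}\cup\{0\}$ if $0_T\in A$ and $\{(\alpha,s,\beta):s\in A\}$ otherwise. A topological Brandt $\lambda^0$-extension of a semitopological monoid $T$ with zero is $B^0_\lambda(T)$ with a topology making it a semitopological semigroup such that for some $\alpha\in\lambda$ the map $s\mapsto(\alpha,s,\alpha)$ ($0_T\mapsto0$) is a homeomorphism $T\to T_{\alpha,\alpha}$. The orthogonal sum of semigroups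 $T_\iota$ with zeros is $\{0\}\cup\bigcup_\iota(T_\iota\setminus\{0_\iota\})$ with products computed in $T_\iota$ when both factors lie in the same $T_\iota$ and the product is non-zero, and $0$ otherwise. *)

(* Defs.v *)
From Stdlib Require Import List Classical ClassicalEpsilon.
Set Implicit Arguments.

Definition subset {X : Type} (A B : X -> Prop) : Prop := forall x, A x -> B x.

Definition finite_set {X : Type} (P : X -> Prop) : Prop :=
  exists l : list X, forall x, P x -> In x l.

Section Topology.
Variable X : Type.
Variable op : (X -> Prop) -> Prop.  (* the family of open sets *)

Definition is_topology : Prop :=
  op (fun _ => True) /\ op (fun _ => False) /\
  (forall F : (X -> Prop) -> Prop, (forall U, F U -> op U) ->
      op (fun x => exists U, F U /\ U x)) /\
  (forall U V, op U -> op V -> op (fun x => U x /\ V x)).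

Definition hausdorff : Prop :=
  forall x y, x <> y -> exists U V, op U /\ op V /\ U x /\ V y /\
     (forall z, U z -> V z -> False).

Definition closure (A : X -> Prop) : X -> Prop :=
  fun x => forall U, op U -> U x -> exists y, U y /\ A y.

Definition interior (A : X -> Prop) : X -> Prop :=
  fun x => exists U, op U /\ U x /\ subset U A.

Definition regular_open (A : X -> Prop) : Prop :=
  forall x, interior (closure A) x <-> A x.

Definition semiregular : Prop :=
  forall U x, op U -> U x -> exists V, regular_open V /\ V x /\ subset V U.

Definition locally_finite (F : (X -> Prop) -> Prop) : Prop :=
  forall x, exists V, op V /\ V x /\
    finite_set (fun U => F U /\ exists y, V y /\ U y).

Definition pseudocompact : Prop :=
  forall F : (X -> Prop) -> Prop,
    (forall U, F U -> op U /\ exists x, U x) ->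
    locally_finite F -> finite_set F.
End Topology.

Definition continuous {X Y : Type} (opX : (X -> Prop) -> Prop)
  (opY : (Y -> Prop) -> Prop) (f : X -> Y) : Prop :=
  forall V, opY V -> opX (fun x => V (f x)).

Definition semitopological_semigroup {X : Type} (op : (X -> Prop) -> Prop)
  (mul : X -> X -> X) : Prop :=
  is_topology op /\ hausdorff op /\
  (forall a b c, mul a (mul b c) = mul (mul a b) c) /\
  (forall a, continuous op op (fun x => mul a x)) /\
  (forall a, continuous op op (fun x => mul x a)).

Record MonZ := {
  mz_car :> Type;
  mz_mul : mz_car -> mz_car -> mz_car;
  mz_one : mz_car;
  mz_zero : mz_car;
  mz_open : (mz_car -> Prop) -> Prop
}.

Definition semitopological_monoid_with_zero (T : MonZ) : Prop :=
  semitopological_semigroup (mz_open T) (mz_mul T) /\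
  (forall x, mz_mul T (mz_one T) x = x /\ mz_mul T x (mz_one T) = x) /\
  (forall x, mz_mul T (mz_zero T) x = mz_zero T /\ mz_mul T x (mz_zero T) = mz_zero T).

Section OrthSum.
Variable I : Type.
Variable T : I -> MonZ.
Variable L : I -> Type.

Definition nz (i : I) : Type := { s : T i | s <> mz_zero (T i) }.

(** Non-zero elements: (i, alpha, s, beta) with s <> 0_{T_i};
    the element [None] is the common zero 0. *)
Definition elt : Type := { i : I & (L i * nz i * L i)%type }.
Definition OS : Type := option elt.

Definition zeroOS : OS := None.

Definition bmul (i : I) (x y : L i * nz i * L i) : OS :=
  match x, y with
  | (a, s, b), (c, t, d) =>
    if excluded_middle_informative (b = c) then
      match excluded_middle_informative
              (mz_mul (T i) (proj1_sig s) (proj1_sig t) = mz_zero (T i)) with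
      | left _ => None
      | right h => Some (existT _ i (a, exist (fun z => z <> mz_zero (T i)) _ h, d))
      end
    else None
  end.

Definition osmul (x y : OS) : OS :=
  match x, y with
  | Some (existT _ i u), Some (existT _ j v) =>
    match excluded_middle_informative (j = i) with
    | left e => @bmul i u (eq_rect j (fun k => (L k * nz k * L k)%type) v i e)
    | right _ => None
    end
  | _, _ => None
  end.

Definition diag_emb (i : I) (alpha : L i) (s : T i) : OS :=
  match excluded_middle_informative (s = mz_zero (T i)) with
  | left _ => None
  | right h => Some (existT _ i (alpha, exist (fun z => z <> mz_zero (T i)) s h, alpha))
  end.

(** (T_i)_{alpha,beta} = {(alpha,s,beta) : s in T_i \ {0}} ∪ {0} *)
Definition block (i : I) (alpha beta : L i) : OS -> Prop :=
  fun x => x = None \/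
    exists s : nz i, x = Some (existT _ i (alpha, s, beta)).

(** With the topology [op] on S, the sub-semigroup B^0_{lambda_i}(T_i) (with the
    subspace topology) is a topological Brandt lambda_i^0-extension of T_i:
    for some alpha, s |-> (alpha,s,alpha) is a homeomorphism of T_i onto
    (T_i)_{alpha,alpha} (with the subspace topology). *)
Definition topological_Brandt_component (op : (OS -> Prop) -> Prop) (i : I) : Prop :=
  exists alpha : L i,
    continuous (mz_open (T i)) op (diag_emb alpha) /\
    (forall V, mz_open (T i) V ->
       exists W, op W /\
         forall s, (W (diag_emb alpha s) <-> V s)).
End OrthSum.

(* Main.v *)
Require Import Defs.
From Stdlib Require Import List Classical ClassicalEpsilon FunctionalExtensionality PropExtensionality ProofIrrelevance.

Lemma op_ext {X : Type} (op : (X -> Prop) -> Prop) (A B : X -> Prop) :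
  (forall x, A x <-> B x) -> op A -> op B.
Proof.
  intros H HA. assert (E : A = B).
  { apply functional_extensionality; intro x; apply propositional_extensionality; auto. }
  now subst.
Qed.

Lemma union_open {X : Type} (op : (X -> Prop) -> Prop) (Htop : is_topology op) (P : X -> Prop) :
  (forall x, P x -> exists U, op U /\ U x /\ forall y, U y -> P y) -> op P.
Proof.
  intros H. destruct Htop as [_ [Hf [Hu _]]].
  apply (op_ext _ (fun x => exists U, (fun U => op U /\ forall y, U y -> P y) U /\ U x)).
  - intro x; split.
    + intros [U [[_ HU] Ux]]; auto.
    + intro Px; destruct (H x Px) as [U [oU [Ux HU]]]; eauto.
  - apply Hu. intros U [oU _]; auto.
Qed.

Lemma block_open I (T : I -> MonZ) (L : I -> Type) (op : (OS T L -> Prop) -> Prop)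
  (HT : forall i, semitopological_monoid_with_zero (T i))
  (HS : semitopological_semigroup op (@osmul I T L)) (i : I) (a b : L i) :
  op (fun y : OS T L => exists s : nz T i, y = Some (existT _ i (a, s, b))).
Proof.
  destruct HS as [Htop [Hhaus [_ [Hl Hr]]]].
  destruct (HT i) as [_ [Hone Hzero]].
  destruct (classic (mz_one (T i) = mz_zero (T i))) as [h1|h1].
  - apply (op_ext _ (fun _ => False)).
    + intro x; split; [tauto|]. intros [[s hs] _]. apply hs.
      destruct (Hone s) as [_ E]. rewrite <- E, h1. apply Hzero.
    + apply Htop.
  - set (ea := Some (existT _ i (a, exist (fun z => z <> mz_zero (T i)) _ h1, a)) : OS T L).
    set (eb := Some (existT _ i (b, exist (fun z => z <> mz_zero (T i)) _ h1, b)) : OS T L).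
    assert (Hc : op (fun z : OS T L => z <> None)).
    { apply union_open; auto. intros x Hx.
      destruct (Hhaus x None Hx) as [U [V [oU [oV [Ux [VN D]]]]]].
      exists U; repeat split; auto. intros y Uy E; subst; eauto. }
    pose proof (Hr eb _ (Hl ea _ Hc)) as G.
    refine (op_ext op _ _ _ G). intro y. cbv beta. subst ea eb. split.
    + destruct y as [[j [[c s] d]]|]; [|simpl; tauto].
      unfold osmul at 2.
      destruct (excluded_middle_informative (i = j)) as [e|n]; [|simpl; tauto].
      destruct e. simpl.
      destruct (excluded_middle_informative (d = b)) as [e2|n]; [|simpl; tauto].
      destruct (excluded_middle_informative _) as [z|nz0]; [simpl; tauto|].
      simpl.
      destruct (excluded_middle_informative (i = i)) as [e|n]; [|tauto].
      replace e with (eq_refl i) by apply proof_irrelevance. simpl.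
      destruct (excluded_middle_informative (a = c)) as [e3|n]; [|tauto].
      intros _. subst. eauto.
    + intros [s ->]. simpl.
      destruct (excluded_middle_informative (i = i)) as [e|n]; [|tauto].
      replace e with (eq_refl i) by apply proof_irrelevance. simpl.
      destruct (excluded_middle_informative (b = b)) as [_|n]; [|tauto].
      destruct (excluded_middle_informative _) as [z|nz0].
      { destruct s as [s hs]. simpl in z. destruct (Hone s) as [_ E]. congruence. }
      simpl.
      destruct (excluded_middle_informative (i = i)) as [e'|n]; [|tauto].
      replace e' with (eq_refl i) by apply proof_irrelevance. simpl.
      destruct (excluded_middle_informative (a = a)) as [_|n]; [|tauto].
      destruct (excluded_middle_informative _) as [z|nz1]; [|discriminate].
      destruct s as [s hs]. simpl in *. destruct (Hone s) as [_ E]. destruct (Hone (mz_mul (T i) s (mz_one (T i)))) as [E2 _]. congruence.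
Qed.

Lemma same_block I (T : I -> MonZ) (L : I -> Type) (t t' : {i : I & (L i * L i)%type}) (y : OS T L) :
  (exists s : nz T (projT1 t), y = Some (existT _ (projT1 t) (fst (projT2 t), s, snd (projT2 t)))) ->
  (exists s : nz T (projT1 t'), y = Some (existT _ (projT1 t') (fst (projT2 t'), s, snd (projT2 t')))) ->
  t = t'.
Proof.
  intros [s Hs] [s' Hs']. rewrite Hs in Hs'.
  apply (f_equal (fun o : OS T L => match o with
    | Some p => existT (fun i => (L i * L i)%type) (projT1 p) (fst (fst (projT2 p)), snd (projT2 p))
    | None => t end)) in Hs'.
  simpl in Hs'. destruct t as [i [a b]], t' as [i' [a' b']]. exact Hs'.
Qed.

Theorem proposition2p8
  (I : Type) (T : I -> MonZ) (L : I -> Type)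
  (op : (OS T L -> Prop) -> Prop)
  (HT : forall i, semitopological_monoid_with_zero (T i))
  (HS : semitopological_semigroup op (@osmul I T L))
  (Hsemireg : semiregular op)
  (Hpc : pseudocompact op)
  (HB : forall i, topological_Brandt_component op i) :
  forall U : OS T L -> Prop, op U -> U (zeroOS T L) ->
    finite_set (fun t : { i : I & (L i * L i)%type } =>
      ~ subset (@block I T L (projT1 t) (fst (projT2 t)) (snd (projT2 t))) U).
Proof.
  intros U0 oU0 U00.
  assert (Htop : is_topology op) by apply HS.
  destruct (Hsemireg U0 None oU0 U00) as [V [rV [V0 VU]]].
  assert (oV : op V).
  { refine (op_ext op _ _ (fun x => rV x) _). apply union_open; auto.
    intros x [W [oW [Wx HW]]]. exists W; repeat split; auto.
    intros y Wy. exists W; auto. }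
  set (N := fun (t : {i : I & (L i * L i)%type}) (y : OS T L) =>
    exists s : nz T (projT1 t), y = Some (existT _ (projT1 t) (fst (projT2 t), s, snd (projT2 t)))).
  assert (oN : forall t, op (N t)).
  { intro t. apply (@block_open I T L op HT HS). }
  set (C := fun x => ~ closure op V x).
  assert (oC : op C).
  { apply union_open; auto. intros x Hx.
    apply not_all_ex_not in Hx as [W Hx].
    apply imply_to_and in Hx as [oW Hx]. apply imply_to_and in Hx as [Wx Hx].
    exists W; repeat split; auto. intros y Wy Hy.
    destruct (Hy W oW Wy) as [z [Wz Vz]]. apply Hx; eauto. }
  assert (VC : forall y, V y -> C y -> False).
  { intros y Vy Cy. apply Cy. intros W oW Wy. eauto. }
  set (W := fun t x => N t x /\ C x).
  assert (oW : forall t, op (W t)).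
  { intro t. apply Htop; auto. }
  set (bad := fun t : {i : I & (L i * L i)%type} =>
      ~ subset (@block I T L (projT1 t) (fst (projT2 t)) (snd (projT2 t))) U0).
  assert (Hne : forall t, bad t -> exists x, W t x).
  { intros t Hb. unfold bad, subset in Hb.
    apply not_all_ex_not in Hb as [x Hx]. apply imply_to_and in Hx as [Bx Ux].
    destruct Bx as [Bx|Bx]; [subst; unfold zeroOS in U00; tauto|].
    apply NNPP. intro Hno. apply Ux, VU, rV.
    exists (N t); repeat split; auto.
    intros y Ny. apply NNPP. intro Cy. apply Hno. exists y. split; auto. }
  set (F := fun Y => exists t, bad t /\ Y = W t).
  destruct (Hpc F) as [l Hl].
  - intros Y [t [Hb ->]]. split; auto.
  - intro x. destruct x as [[i [[a s] b]]|].
    + set (t0 := existT (fun i => (L i * L i)%type) i (a, b)).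
      exists (N t0); repeat split; auto.
      { exists s. reflexivity. }
      exists (W t0 :: nil). intros Y [[t [Hb ->]] [y [Ny [Ny' _]]]].
      left. rewrite (@same_block I T L t0 t y Ny Ny'). reflexivity.
    + exists V; repeat split; auto. exists nil.
      intros Y [[t [Hb ->]] [y [Vy [_ Cy]]]]. exfalso; eauto.
  - set (pick := fun Y : OS T L -> Prop => epsilon (inhabits (zeroOS T L)) Y).
    set (tri := fun x : OS T L => match x with
       | None => nil
       | Some (existT _ i (a, _, b)) => existT (fun i => (L i * L i)%type) i (a, b) :: nil end).
    exists (flat_map (fun Y => tri (pick Y)) l).
    intros t Hb. apply in_flat_map. exists (W t). split.
    + apply Hl. exists t; auto.
    + assert (Hp : W t (pick (W t))) by (apply epsilon_spec; apply Hne; auto).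
      destruct Hp as [[s Hs] _]. rewrite Hs. destruct t as [i [a b]]. simpl. auto.
Qed.
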